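(* Let $n\ge2$, $r\ge1$, let $V_1,\dots,V_r\in\mathrm{Mat}(n,\mathbb{C})$ satisfy $\operatorname{tr}(V_s^*V_m)=\delta_{sm}$, and define $$P_{\mathcal T}=\sum_{s=1}^r\sum_{a,b,c,d=1}^n (V_s)_{ab}(\bar V_s)_{cd}\,E^{(n)}_{ac}\otimes E^{(n)}_{bd},\qquad W_{\mathcal T}=\sum_{s,m=1}^r E^{(r)}_{sm}\otimes V_m\bar V_s,\qquad A_{\mathcal T}=W_{\mathcal T}W_{\mathcal T}^*.$$ Let $Q>0$ be real and write $P_1=P_{\mathcal T}\otimes I_n$, $P_2=I_n\otimes P_{\mathcal T}$. (a) $P_{\mathcal T}$ is a nonzero solution of $P^*=P$, $P^2=P$, $Q^2P_1P_2P_1=P_1$, $Q^2P_2P_1P_2=P_2$ if and only if $QW_{\mathcal T}$ is a unitary matrix, equivalently if and only if $Q^2A_{\mathcal T}$ is the identity matrix. (b) $P_{\mathcal T}$ is a nontrivial solution of $P^*=P$, $P^2=P$, $Q^2(P_1P_2P_1-P_2P_1P_2)=P_1-P_2$ that is not of Temperley–Lieb type if and only if $Q>1$ and the set of eigenvalues of $A_{\mathcal T}$ is exactly $\{1,Q^{-2}\}$.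
   Context: $E^{(p)}_{ab}\in\mathrm{Mat}(p,\mathbb{C})$ is the matrix unit with $(E^{(p)}_{ab})_{ij}=\delta_{ai}\delta_{bj}$; $\bar V$ is entrywise complex conjugate, $V^*$ conjugate transpose; $\otimes$ is the Kronecker product. A solution $P$ of $P^*=P$, $P^2=P$, $Q^2(P_1P_2P_1-P_2P_1P_2)=P_1-P_2$ is trivial if $P=0$ or $P=I_n\otimes I_n$, nontrivial otherwise; it is of Temperley–Lieb type if moreover $Q^2P_1P_2P_1=P_1$ and $Q^2P_2P_1P_2=P_2$. *)

(* Defs.v *)
(* Complex numbers are modelled as R[i] = complex R for an
   arbitrary real closed field R (for R = the reals this is C). *)
From HB Require Import structures.
From mathcomp Require Import all_boot all_order all_algebra.
From mathcomp Require Import complex mxtens.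
Set Implicit Arguments. Unset Strict Implicit. Unset Printing Implicit Defensive.
Import Order.TTheory GRing.Theory Num.Theory.
Local Open Scope ring_scope.

Definition mxconj (C : numClosedFieldType) m n (V : 'M[C]_(m, n)) : 'M[C]_(m, n) :=
  map_mx (fun x : C => x^*) V.
Definition adj (C : numClosedFieldType) m n (V : 'M[C]_(m, n)) : 'M[C]_(n, m) :=
  (mxconj V)^T.

Definition unitary (C : numClosedFieldType) k (U : 'M[C]_k) : Prop :=
  U *m adj U = 1%:M /\ adj U *m U = 1%:M.

Definition PT (C : numClosedFieldType) n r (V : 'I_r -> 'M[C]_n) : 'M[C]_(n * n) :=
  \sum_(s < r) \sum_(a < n) \sum_(b < n) \sum_(c < n) \sum_(d < n)
     (V s a b * (V s c d)^*) *: (delta_mx a c *t delta_mx b d).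

Definition WT (C : numClosedFieldType) n r (V : 'I_r -> 'M[C]_n) : 'M[C]_(r * n) :=
  \sum_(s < r) \sum_(m < r) (delta_mx s m *t (V m *m mxconj (V s))).

Definition AT (C : numClosedFieldType) n r (V : 'I_r -> 'M[C]_n) : 'M[C]_(r * n) :=
  WT V *m adj (WT V).

Definition P1 (C : numClosedFieldType) n (P : 'M[C]_(n * n)) : 'M[C]_(n * n * n) :=
  P *t (1%:M : 'M[C]_n).
Definition P2 (C : numClosedFieldType) n (P : 'M[C]_(n * n)) : 'M[C]_(n * n * n) :=
  castmx (mulnA n n n, mulnA n n n) ((1%:M : 'M[C]_n) *t P).

Definition selfadj_idem (C : numClosedFieldType) k (P : 'M[C]_k) : Prop :=
  adj P = P /\ P *m P = P.

Definition TL_rel (C : numClosedFieldType) n (Q : C) (P : 'M[C]_(n * n)) : Prop :=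
  Q ^+ 2 *: (P1 P *m P2 P *m P1 P) = P1 P /\ Q ^+ 2 *: (P2 P *m P1 P *m P2 P) = P2 P.

Definition main_rel (C : numClosedFieldType) n (Q : C) (P : 'M[C]_(n * n)) : Prop :=
  Q ^+ 2 *: (P1 P *m P2 P *m P1 P - P2 P *m P1 P *m P2 P) = P1 P - P2 P.

Definition trivial_sol (C : numClosedFieldType) k (P : 'M[C]_k) : Prop :=
  P = 0 \/ P = 1%:M.

(* Main.v *)
Require Import Defs.
From HB Require Import structures.
From mathcomp Require Import all_boot all_order all_algebra.
From mathcomp Require Import complex mxtens.
From mathcomp Require Import ring.
Set Implicit Arguments. Unset Strict Implicit. Unset Printing Implicit Defensive.
Import Order.TTheory GRing.Theory Num.Theory.
Local Open Scope ring_scope.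

Section Adj.
Variable C : numClosedFieldType.

Lemma adjE m p (A : 'M[C]_(m,p)) i j : adj A i j = (A j i)^*.
Proof. by rewrite /adj /mxconj !mxE. Qed.

Lemma adjK m p (A : 'M[C]_(m,p)) : adj (adj A) = A.
Proof. by apply/matrixP=> i j; rewrite !adjE conjCK. Qed.

Lemma adjM m p k (A : 'M[C]_(m,p)) (B : 'M[C]_(p,k)) : adj (A *m B) = adj B *m adj A.
Proof.
apply/matrixP=> i j; rewrite !adjE !mxE rmorph_sum; apply: eq_bigr => l _.
by rewrite /adj /mxconj !mxE rmorphM mulrC.
Qed.

Lemma adjD m p (A B : 'M[C]_(m,p)) : adj (A + B) = adj A + adj B.
Proof. by apply/matrixP=> i j; rewrite /adj /mxconj !mxE rmorphD. Qed.

Lemma adjN m p (A : 'M[C]_(m,p)) : adj (- A) = - adj A.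
Proof. by apply/matrixP=> i j; rewrite /adj /mxconj !mxE rmorphN. Qed.

Lemma adjB m p (A B : 'M[C]_(m,p)) : adj (A - B) = adj A - adj B.
Proof. by rewrite adjD adjN. Qed.

Lemma adjZ m p a (A : 'M[C]_(m,p)) : adj (a *: A) = a^* *: adj A.
Proof. by apply/matrixP=> i j; rewrite /adj /mxconj !mxE rmorphM. Qed.

Lemma adj_scalar m a : adj (a%:M : 'M[C]_m) = (a^*)%:M.
Proof.
apply/matrixP=> i j; rewrite /adj /mxconj !mxE eq_sym.
by case: (i == j); rewrite ?mulr1n ?mulr0n ?rmorph0 ?conjC1.
Qed.

Lemma adj1 m : adj (1%:M : 'M[C]_m) = 1%:M.
Proof. by rewrite adj_scalar conjC1. Qed.

Lemma adj0 m p : adj (0 : 'M[C]_(m,p)) = 0.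
Proof. by apply/matrixP=> i j; rewrite /adj /mxconj !mxE rmorph0. Qed.

Lemma adj_eq0 m p (A : 'M[C]_(m,p)) : adj A *m A = 0 -> A = 0.
Proof.
move=> H; apply/matrixP=> i j.
have := congr1 (fun M : 'M[C]_p => M j j) H; rewrite !mxE => Hs.
have Hi : forall l : 'I_m, true -> (A l j)^* * A l j = 0.
  apply: psumr_eq0P => [l _|]; last first. 
    by apply: etrans Hs; apply: eq_bigr => l _; rewrite /adj /mxconj !mxE.
  by rewrite -normCKC exprn_ge0.
by move: (Hi i isT) => /eqP; rewrite -normCKC expf_eq0 /= normr_eq0 => /eqP ->.
Qed.


Lemma sub_swap (V : zmodType) (a b c d : V) : (a - b) - (c - d) = (a - c) - (b - d).
Proof. by rewrite !opprD !opprK addrACA. Qed.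

Lemma herm_sq2 k p (H : 'M[C]_k) (B : 'M[C]_(k,p)) :
  adj H = H -> H *m H *m B = 0 -> H *m B = 0.
Proof.
move=> aH HHB; apply: adj_eq0.
by rewrite adjM aH -mulmxA [H *m (H *m B)]mulmxA HHB mulmx0.
Qed.

Lemma herm_nil N (Z : 'M[C]_N) : adj Z = Z -> Z *m Z *m Z = 0 -> Z = 0.
Proof.
move=> aZ Z3.
have Z2 : Z *m Z = 0.
  apply: adj_eq0; rewrite adjM aZ mulmxA Z3 mul0mx //.
by apply: adj_eq0; rewrite aZ.
Qed.

Lemma cube0 N (A B Z : 'M[C]_N) : A *m Z *m A = 0 -> A *m Z *m B = 0 ->
  B *m Z *m A = 0 -> B *m Z *m B = 0 -> (A - B) *m Z *m (A - B) = 0.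
Proof.
move=> h1 h2 h3 h4.
by rewrite mulmxBr !mulmxBl h1 h2 h3 h4 !subr0.
Qed.

Lemma mxadj_ge0 m p (A : 'M[C]_(m,p)) i : 0 <= (A *m adj A) i i.
Proof.
rewrite mxE; apply: sumr_ge0 => l _.
by rewrite /adj /mxconj !mxE -normCK exprn_ge0.
Qed.

Lemma mxadj_eq0 p (A : 'M[C]_(1,p)) : (A *m adj A) 0 0 = 0 -> A = 0.
Proof.
move=> H; rewrite -[A]adjK; have -> : adj A = 0; last by rewrite adj0.
apply: adj_eq0; rewrite adjK; apply/matrixP => i j.
by rewrite !ord1 H mxE.
Qed.

Lemma proj_eq N (A B : 'M[C]_N) : adj A = A -> adj B = B -> A *m A = A ->
  B *m B = B -> A *m B *m A = A -> B *m A *m B = B -> A = B.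
Proof.
move=> aA aB iA iB ABA BAB.
have E1 : A = B *m A.
  apply/eqP; rewrite -subr_eq0; apply/eqP; apply: adj_eq0.
  rewrite adjB adjM aA aB mulmxBl !mulmxBr !mulmxA.
  by rewrite -[A *m B *m B]mulmxA iB ABA iA !subrr.
have E2 : B = A *m B.
  apply/eqP; rewrite -subr_eq0; apply/eqP; apply: adj_eq0.
  rewrite adjB adjM aA aB mulmxBl !mulmxBr !mulmxA.
  by rewrite -[B *m A *m A]mulmxA iA BAB iB !subrr.
by rewrite -aA E1 adjM aA aB -E2.
Qed.

Lemma proj_split p N (w : 'M[C]_(p,N)) (P : 'M[C]_N) : adj P = P -> P *m P = P ->
  w *m adj w = (w *m P) *m adj (w *m P) + (w *m (1%:M - P)) *m adj (w *m (1%:M - P))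
  /\ w *m P *m adj w = (w *m P) *m adj (w *m P).
Proof.
move=> aP iP.
have e : w *m P *m adj w = (w *m P) *m adj (w *m P).
  by rewrite adjM aP mulmxA -(mulmxA w P P) iP.
split=> //; rewrite -e adjM adjB adj1 aP mulmxA -(mulmxA w (1%:M - P)).
have -> : (1%:M - P) *m (1%:M - P) = 1%:M - P.
  by rewrite mulmxBl mul1mx mulmxBr mulmx1 iP subrr subr0.
by rewrite mulmxBr mulmx1 mulmxBl addrC subrK.
Qed.

Lemma sandwich N k (J J' : 'M[C]_(N,k)) (M M' : 'M[C]_k) (Z : 'M[C]_N) :
  J *m M *m adj J *m Z *m (J' *m M' *m adj J') =
  J *m M *m (adj J *m Z *m J') *m M' *m adj J'.
Proof. by rewrite !mulmxA. Qed.

Section Abs.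
Variables (N k : nat) (J1 J2 : 'M[C]_(N, k)) (c : C).
Hypotheses (h1 : adj J1 *m J1 = 1%:M) (h2 : adj J2 *m J2 = 1%:M) (hc : c^* = c).

Let K := adj J1 *m J2.
Let X := K *m adj K.
Let Y := adj K *m K.
Let PP1 := J1 *m adj J1.
Let PP2 := J2 *m adj J2.
Let g (M : 'M[C]_k) := (M - 1%:M) *m (c *: M - 1%:M).

Lemma adjKE : adj K = adj J2 *m J1.
Proof. by rewrite /K adjM adjK. Qed.

Lemma L121 : PP1 *m PP2 *m PP1 = J1 *m X *m adj J1.
Proof. by rewrite /PP1 /PP2 /X adjKE /K !mulmxA. Qed.

Lemma L212 : PP2 *m PP1 *m PP2 = J2 *m Y *m adj J2.
Proof. by rewrite /PP1 /PP2 /Y adjKE /K !mulmxA. Qed.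

Lemma E11 (M : 'M_k) : adj J1 *m (J1 *m M *m adj J1) *m J1 = M.
Proof. by rewrite !mulmxA h1 mul1mx -mulmxA h1 mulmx1. Qed.
Lemma E22 (M : 'M_k) : adj J2 *m (J2 *m M *m adj J2) *m J2 = M.
Proof. by rewrite !mulmxA h2 mul1mx -mulmxA h2 mulmx1. Qed.
Lemma E12 (M : 'M_k) : adj J1 *m (J2 *m M *m adj J2) *m J1 = K *m M *m adj K.
Proof. by rewrite adjKE /K !mulmxA. Qed.
Lemma E21 (M : 'M_k) : adj J2 *m (J1 *m M *m adj J1) *m J2 = adj K *m M *m K.
Proof. by rewrite adjKE /K !mulmxA. Qed.
Lemma F11 (M : 'M_k) : adj J1 *m (J1 *m M *m adj J1) *m J2 = M *m K.
Proof. by rewrite /K !mulmxA h1 mul1mx. Qed.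
Lemma F12 (M : 'M_k) : adj J1 *m (J2 *m M *m adj J2) *m J2 = K *m M.
Proof. by rewrite /K -!mulmxA h2 mulmx1. Qed.
Lemma F21 (M : 'M_k) : adj J2 *m (J1 *m M *m adj J1) *m J1 = adj K *m M.
Proof. by rewrite adjKE -!mulmxA h1 mulmx1. Qed.
Lemma F22 (M : 'M_k) : adj J2 *m (J2 *m M *m adj J2) *m J1 = M *m adj K.
Proof. by rewrite adjKE !mulmxA h2 mul1mx. Qed.

Lemma TL1 : c *: (PP1 *m PP2 *m PP1) = PP1 <-> c *: X = 1%:M.
Proof.
rewrite L121; split=> [H|H].
  have HH := congr1 (fun M => adj J1 *m M *m J1) H.
  by rewrite /= scalemxAl scalemxAr E11 /PP1 !mulmxA h1 mul1mx h1 in HH.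
by rewrite scalemxAl scalemxAr H mulmx1.
Qed.

Lemma TL2 : c *: (PP2 *m PP1 *m PP2) = PP2 <-> c *: Y = 1%:M.
Proof.
rewrite L212; split=> [H|H].
  have HH := congr1 (fun M => adj J2 *m M *m J2) H.
  by rewrite /= scalemxAl scalemxAr E22 /PP2 !mulmxA h2 mul1mx h2 in HH.
by rewrite scalemxAl scalemxAr H mulmx1.
Qed.

Let Z := J1 *m (c *: X - 1%:M) *m adj J1 - J2 *m (c *: Y - 1%:M) *m adj J2.

Lemma ZE : Z = c *: (PP1 *m PP2 *m PP1 - PP2 *m PP1 *m PP2) - (PP1 - PP2).
Proof.
rewrite L121 L212 /Z !mulmxBr !mulmxBl !mulmx1 -!scalemxAr -!scalemxAl scalerBr.
by rewrite sub_swap.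
Qed.

Lemma gXE : g X = (c *: (X *m X) - X) - (c *: X - 1%:M).
Proof. by rewrite /g mulmxBl mulmxBr mul1mx mulmx1 -scalemxAr. Qed.
Lemma gYE : g Y = (c *: (Y *m Y) - Y) - (c *: Y - 1%:M).
Proof. by rewrite /g mulmxBl mulmxBr mul1mx mulmx1 -scalemxAr. Qed.

Lemma Z11 : adj J1 *m Z *m J1 = - g X.
Proof.
rewrite /Z mulmxBr mulmxBl E11 E12 gXE opprB; congr (_ - _).
rewrite mulmxBr mulmxBl mulmx1 -scalemxAr -scalemxAl.
by rewrite /Y /X !mulmxA.
Qed.

Lemma Z22 : adj J2 *m Z *m J2 = g Y.
Proof.
rewrite /Z mulmxBr mulmxBl E22 E21 gYE; congr (_ - _).
rewrite mulmxBr mulmxBl mulmx1 -scalemxAr -scalemxAl.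
by rewrite /Y /X !mulmxA.
Qed.

Lemma Z12 : adj J1 *m Z *m J2 = 0.
Proof.
rewrite /Z mulmxBr mulmxBl F11 F12 mulmxBl mulmxBr mul1mx mulmx1.
by rewrite -scalemxAl -scalemxAr /X /Y !mulmxA subrr.
Qed.

Lemma Z21 : adj J2 *m Z *m J1 = 0.
Proof.
rewrite /Z mulmxBr mulmxBl F21 F22 mulmxBl mulmxBr mul1mx mulmx1.
by rewrite -scalemxAl -scalemxAr /X /Y !mulmxA subrr.
Qed.

Lemma adjX : adj X = X.
Proof. by rewrite /X adjM adjK. Qed.
Lemma adjY : adj Y = Y.
Proof. by rewrite /Y adjM adjK. Qed.

Lemma adjZ_ : adj Z = Z.
Proof.
rewrite /Z adjB !adjM !adjK !adjB !adjZ !adj1 hc. rewrite adjX adjY.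
by rewrite !mulmxA.
Qed.

Lemma main_iff : c *: (PP1 *m PP2 *m PP1 - PP2 *m PP1 *m PP2) = PP1 - PP2 <->
  g X = 0 /\ g Y = 0.
Proof.
have -> : c *: (PP1 *m PP2 *m PP1 - PP2 *m PP1 *m PP2) = PP1 - PP2 <-> Z = 0.
  by rewrite ZE; split=> [->|/eqP]; [rewrite subrr | rewrite subr_eq0 => /eqP].
split=> [Z0|[gX gY]].
  split; last by rewrite -Z22 Z0 mulmx0 mul0mx.
  by apply/eqP; rewrite -oppr_eq0 -Z11 Z0 mulmx0 mul0mx.
apply: herm_nil; first exact: adjZ_.
have {1 3}-> : Z = J1 *m (c *: X - 1%:M) *m adj J1 - J2 *m (c *: Y - 1%:M) *m adj J2 by [].
apply: cube0.
- by rewrite sandwich Z11 gX oppr0 !(mulmx0, mul0mx).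
- by rewrite sandwich Z12 !(mulmx0, mul0mx).
- by rewrite sandwich Z21 !(mulmx0, mul0mx).
- by rewrite sandwich Z22 gY !(mulmx0, mul0mx).
Qed.

Lemma aPP1 : adj PP1 = PP1. Proof. by rewrite /PP1 adjM adjK. Qed.
Lemma aPP2 : adj PP2 = PP2. Proof. by rewrite /PP2 adjM adjK. Qed.
Lemma iPP1 : PP1 *m PP1 = PP1. Proof. by rewrite /PP1 mulmxA -(mulmxA J1) h1 mulmx1. Qed.
Lemma iPP2 : PP2 *m PP2 = PP2. Proof. by rewrite /PP2 mulmxA -(mulmxA J2) h2 mulmx1. Qed.

Lemma Y1P : Y = 1%:M -> PP1 = PP2.
Proof.
move=> Y1; have X1 : X = 1%:M by apply: mulmx1C.
have P121 : PP1 *m PP2 *m PP1 = PP1 by rewrite L121 X1 mulmx1.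
have P212 : PP2 *m PP1 *m PP2 = PP2 by rewrite L212 Y1 mulmx1.
exact: proj_eq aPP1 aPP2 iPP1 iPP2 P121 P212.
Qed.

Lemma Ybound (v : 'rV[C]_k) a : v *m Y = a *: v -> v != 0 ->
  exists x y : C, [/\ 0 < x, 0 <= y, y <= x & a * x = y].
Proof.
move=> vY vnz.
have e1 : v *m adj v = (v *m adj J2) *m adj (v *m adj J2).
  by rewrite adjM adjK !mulmxA -(mulmxA v) h2 mulmx1.
have e2 : v *m Y *m adj v = (v *m adj J2) *m PP1 *m adj (v *m adj J2).
  by rewrite /Y adjKE /K /PP1 !adjM !adjK !mulmxA.
have [e3 e4] := proj_split (v *m adj J2) aPP1 iPP1.
exists ((v *m adj v) 0 0), ((v *m Y *m adj v) 0 0); split.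
- rewrite lt0r mxadj_ge0 andbT; apply/eqP => H0; move/eqP: vnz; apply.
  exact: mxadj_eq0.
- by rewrite e2 e4 mxadj_ge0.
- have hD : forall A B : 'M[C]_1, (A + B) 0 0 = A 0 0 + B 0 0 by move=> A B; rewrite mxE.
  by rewrite e1 e3 e2 e4 hD lerDl mxadj_ge0.
- by rewrite vY -scalemxAl [RHS]mxE.
Qed.


End Abs.


Lemma spec2 k (H : 'M[C]_k) (al be : C) : adj H = H -> al^* = al -> be^* = be ->
  (forall a, eigenvalue H a -> a = al \/ a = be) -> (H - al%:M) *m (H - be%:M) = 0.
Proof.
case: k H => [|k] H aH ral rbe Hev; first by apply/matrixP => [[]].
pose pG := ('X - al%:P) * ('X - be%:P).
have hG : horner_mx H pG = (H - al%:M) *m (H - be%:M).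
  by rewrite rmorphM !rmorphB /= horner_mx_X !horner_mx_C mulmxE.
have hG' : horner_mx H (('X - be%:P) * ('X - al%:P)) = (H - be%:M) *m (H - al%:M).
  by rewrite rmorphM !rmorphB /= horner_mx_X !horner_mx_C mulmxE.
set G := horner_mx H pG.
have aG : adj G = G.
  by rewrite /G hG adjM !adjB aH !adj_scalar ral rbe -hG' mulrC.
have key : forall s : seq C, (forall z, z \in s -> z = al \/ z = be) ->
    forall B : 'M_k.+1, horner_mx H (\prod_(z <- s) ('X - z%:P)) *m B = 0 -> G *m B = 0.
  elim=> [|z s IH] Hs B.
    by rewrite big_nil rmorph1 mul1mx => ->; rewrite mulmx0.
  rewrite big_cons => HB.
  apply: (herm_sq2 aG); rewrite -mulmxA; apply: IH.
    by move=> y ys; apply: Hs; rewrite inE ys orbT.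
  have [pW hW] : exists pW, pG = pW * ('X - z%:P).
    case: (Hs z (mem_head _ _)) => ->; first by exists ('X - be%:P); rewrite /pG mulrC.
    by exists ('X - al%:P).
  rewrite mulmxA /G mulmxE -rmorphM hW.
  have -> : (\prod_(z0 <- s) ('X - z0%:P)) * (pW * ('X - z%:P)) =
            pW * (('X - z%:P) * \prod_(z0 <- s) ('X - z0%:P)) by ring.
  by rewrite rmorphM -mulrA -mulmxE HB mulmx0.
have [rs Hrs] := closed_field_poly_normal (char_poly H).
rewrite (monicP (char_poly_monic H)) scale1r in Hrs.
rewrite -hG -[horner_mx H pG]mulmx1; apply: (key rs).
  by move=> z zin; apply: Hev; rewrite eigenvalue_root_char Hrs root_prod_XsubC.
by rewrite -Hrs Cayley_Hamilton mul0mx.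
Qed.

Lemma g_eig k (H : 'M[C]_k) (v : 'rV[C]_k) a c : v *m H = a *: v ->
  v *m ((H - 1%:M) *m (c *: H - 1%:M)) = ((a - 1) * (c * a - 1)) *: v.
Proof.
move=> vH.
have e1 : v *m (H - 1%:M) = (a - 1) *: v by rewrite mulmxBr mulmx1 vH scalerBl scale1r.
have e2 : v *m (c *: H - 1%:M) = (c * a - 1) *: v.
  by rewrite mulmxBr mulmx1 -scalemxAr vH scalerA scalerBl scale1r.
by rewrite mulmxA e1 -scalemxAl e2 scalerA.
Qed.

Lemma nz_row m p (M : 'M[C]_(m,p)) : M != 0 -> exists i, row i M != 0.
Proof.
move=> nz; case: (boolP [exists i, row i M != 0]) => [/existsP//|/existsPn H].
case/eqP: nz; apply/row_matrixP => i; rewrite row0.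
by move: (H i); rewrite negbK => /eqP.
Qed.

End Adj.

Section Concrete.
Variable C : numClosedFieldType.

Lemma sum2 (U : nmodType) m p (F : 'I_(m * p) -> U) :
  \sum_k F k = \sum_i \sum_j F (mxtens_index (i, j)).
Proof.
rewrite pair_big /= (reindex (@mxtens_index m p)) /=.
  by apply: eq_bigr => -[i j].
by exists (@mxtens_unindex m p); move=> x _; rewrite ?mxtens_indexK ?mxtens_unindexK.
Qed.

Lemma idx2 m p (x : 'I_(m * p)) : exists i j, x = mxtens_index (i, j).
Proof. by case: (mxtens_indexP x) => i j; exists i, j. Qed.

Lemma tens_eq m p (x a : 'I_m) (y b : 'I_p) :
  (mxtens_index (x, y) == mxtens_index (a, b)) = (x == a) && (y == b).
Proof. by rewrite (inj_eq (can_inj (@mxtens_indexK m p))) xpair_eqE. Qed.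

Lemma sum_one (I : finType) (i0 : I) (F : I -> C) :
  (forall i, i != i0 -> F i = 0) -> \sum_i F i = F i0.
Proof. by move=> H; rewrite (bigD1 i0) //= big1 ?addr0 // => i /H. Qed.
Arguments sum_one {I} i0 {F}.

Lemma negbTE' (T : eqType) (x y : T) : x != y -> (y == x) = false.
Proof. by rewrite eq_sym => /negbTE. Qed.

Lemma tens_delta m p (a c : 'I_m) (b d : 'I_p) :
  delta_mx a c *t delta_mx b d =
  delta_mx (mxtens_index (a, b)) (mxtens_index (c, d)) :> 'M[C]_(m * p).
Proof.
apply/matrixP => x y; case: (idx2 x) => x1 [x2 ->]; case: (idx2 y) => y1 [y2 ->].
rewrite tensmxE !mxE !tens_eq -natrM mulnb.
by case: (x1 == a); case: (y1 == c); case: (x2 == b); case: (y2 == d).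
Qed.

Lemma tens_delta_sum n (G : 'I_n -> 'I_n -> 'I_n -> 'I_n -> C) :
  \sum_a \sum_b \sum_c \sum_d G a b c d *: (delta_mx a c *t delta_mx b d) =
  \matrix_(x, y) G (mxtens_unindex x).1 (mxtens_unindex x).2
                   (mxtens_unindex y).1 (mxtens_unindex y).2 :> 'M[C]_(n * n).
Proof.
rewrite [RHS]matrix_sum_delta. rewrite sum2; apply: eq_bigr => a _.
apply: eq_bigr => b _; rewrite sum2; apply: eq_bigr => c _.
apply: eq_bigr => d _.
by rewrite mxE !mxtens_indexK tens_delta.
Qed.

Variables (n r : nat) (V : 'I_r -> 'M[C]_n).

Definition Vm : 'M[C]_(n * n, r) :=
  \matrix_(x, s) V s (mxtens_unindex x).1 (mxtens_unindex x).2.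

Lemma VmE a b s : Vm (mxtens_index (a, b)) s = V s a b.
Proof. by rewrite mxE mxtens_indexK. Qed.

Lemma PT_E : PT V = Vm *m adj Vm.
Proof.
rewrite /PT.
under eq_bigr => s _ do rewrite tens_delta_sum.
apply/matrixP => x y; rewrite summxE !mxE; apply: eq_bigr => s _.
by rewrite !mxE.
Qed.


Lemma cjl (b : nat) (x : C) : (b%:R * x)^* = b%:R * x^*.
Proof. by rewrite rmorphM rmorph_nat. Qed.
Lemma cjr (b : nat) (x : C) : (x * b%:R)^* = x^* * b%:R.
Proof. by rewrite rmorphM rmorph_nat. Qed.

Lemma cjM (x y : C) : (x * y^*)^* = x^* * y.
Proof. by rewrite -[in RHS](conjCK y) -rmorphM. Qed.

Definition t3 (a b e : 'I_n) : 'I_(n * n * n) := mxtens_index (mxtens_index (a, b), e).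

Lemma idx3 (x : 'I_(n * n * n)) : exists a b e, x = t3 a b e.
Proof.
case: (idx2 x) => ab [e ->]; case: (idx2 ab) => a [b ->].
by exists a, b, e.
Qed.

Lemma sum3 (F : 'I_(n * n * n) -> C) :
  \sum_x F x = \sum_a \sum_b \sum_e F (t3 a b e).
Proof. by rewrite sum2 sum2. Qed.

Definition J1 : 'M[C]_(n * n * n, r * n) :=
  \matrix_(x, y) (V (mxtens_unindex y).1 (mxtens_unindex (mxtens_unindex x).1).1
                    (mxtens_unindex (mxtens_unindex x).1).2 *
                 ((mxtens_unindex x).2 == (mxtens_unindex y).2)%:R).

Definition J2 : 'M[C]_(n * n * n, r * n) :=
  \matrix_(x, y) (((mxtens_unindex (mxtens_unindex x).1).1 == (mxtens_unindex y).2)%:R *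
                  V (mxtens_unindex y).1 (mxtens_unindex (mxtens_unindex x).1).2
                    (mxtens_unindex x).2).

Lemma J1E a b e s i : J1 (t3 a b e) (mxtens_index (s, i)) = V s a b * (e == i)%:R.
Proof. by rewrite /J1 /t3 mxE !mxtens_indexK. Qed.

Lemma J2E a b e s i : J2 (t3 a b e) (mxtens_index (s, i)) = (a == i)%:R * V s b e.
Proof. by rewrite /J2 /t3 mxE !mxtens_indexK. Qed.

Lemma adjE' p q (A : 'M[C]_(p, q)) i j : adj A i j = (A j i)^*.
Proof. by rewrite /adj /mxconj !mxE. Qed.

Lemma P1_E (P : 'M[C]_(n * n)) a b e c d f :
  P1 P (t3 a b e) (t3 c d f) = P (mxtens_index (a, b)) (mxtens_index (c, d)) * (e == f)%:R.
Proof. by rewrite /P1 /t3 tensmxE mxE. Qed.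

Lemma cast_t3 a b e :
  cast_ord (esym (mulnA n n n)) (t3 a b e) = mxtens_index (a, mxtens_index (b, e)).
Proof. by apply: val_inj => /=; rewrite mulnDl -mulnA addnA. Qed.

Lemma P2_E (P : 'M[C]_(n * n)) a b e c d f :
  P2 P (t3 a b e) (t3 c d f) = (a == c)%:R * P (mxtens_index (b, e)) (mxtens_index (d, f)).
Proof. by rewrite /P2 castmxE /= !cast_t3 tensmxE mxE. Qed.

Lemma CJ1 : P1 (PT V) = J1 *m adj J1.
Proof.
apply/matrixP => x y; case: (idx3 x) => a [b [e ->]]; case: (idx3 y) => c [d [f ->]].
rewrite P1_E PT_E !mxE sum2 mulr_suml; apply: eq_bigr => s _.
rewrite (sum_one e) /=; last first.
  by move=> i ne; rewrite adjE' !J1E (negbTE' ne) !mulr0 mul0r.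
rewrite adjE' !adjE' !J1E !VmE eqxx cjr [f == e]eq_sym.
by case: (e == f); rewrite ?mulr0 ?mulr1 ?mul0r ?rmorph0.
Qed.


Lemma CJ2 : P2 (PT V) = J2 *m adj J2.
Proof.
apply/matrixP => x y; case: (idx3 x) => a [b [e ->]]; case: (idx3 y) => c [d [f ->]].
rewrite P2_E PT_E !mxE sum2 mulr_sumr; apply: eq_bigr => s _.
rewrite (sum_one a) /=; last first.
  by move=> i ne; rewrite adjE' !J2E (negbTE' ne) !mul0r.
rewrite adjE' !adjE' !J2E !VmE eqxx cjl [c == a]eq_sym.
by rewrite /= mul1r; ring.
Qed.

Lemma WE s i m j : WT V (mxtens_index (m, j)) (mxtens_index (s, i)) = (V s *m mxconj (V m)) j i.
Proof.
rewrite /WT summxE (sum_one m) /=; last first.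
  move=> s' ne; rewrite summxE big1 // => m' _.
  by rewrite tensmxE mxE (negbTE' ne) mul0r.
rewrite summxE (sum_one s) /=; last first.
  by move=> m' ne; rewrite tensmxE mxE (negbTE' ne) andbF mul0r.
by rewrite tensmxE mxE !eqxx mul1r.
Qed.

Hypothesis horth : forall s m : 'I_r, \tr (adj (V s) *m V m) = (s == m)%:R.

Lemma orth2 s m : \sum_a \sum_b (V s a b)^* * V m a b = (s == m)%:R.
Proof.
rewrite -horth /mxtrace.
under [RHS]eq_bigr => j _ do rewrite mxE.
rewrite [RHS]exchange_big; apply: eq_bigr => a _; apply: eq_bigr => b _.
by rewrite adjE'.
Qed.

Lemma Vm_iso : adj Vm *m Vm = 1%:M.
Proof.
apply/matrixP => s m; rewrite !mxE sum2 -orth2; apply: eq_bigr => a _.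
by apply: eq_bigr => b _; rewrite adjE' !VmE.
Qed.

Lemma CI1 : adj J1 *m J1 = 1%:M.
Proof.
apply/matrixP => x y; case: (idx2 x) => s [i ->]; case: (idx2 y) => m [j ->].
rewrite !mxE tens_eq -mulnb natrM -orth2 sum3 mulr_suml; apply: eq_bigr => a _.
rewrite mulr_suml; apply: eq_bigr => b _.
rewrite (sum_one i) /=; last first.
  by move=> e ne; rewrite adjE' !J1E (negbTE ne) cjr !mulr0 mul0r.
rewrite adjE' !J1E eqxx cjr /= mulr1; ring.
Qed.

Lemma CI2 : adj J2 *m J2 = 1%:M.
Proof.
apply/matrixP => x y; case: (idx2 x) => s [i ->]; case: (idx2 y) => m [j ->].
rewrite !mxE tens_eq -mulnb natrM -orth2 sum3 (sum_one i) /=; last first.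
  move=> a ne; rewrite big1 // => b _; rewrite big1 // => e _.
  by rewrite adjE' !J2E (negbTE ne) cjl !mul0r.
rewrite mulr_suml; apply: eq_bigr => b _.
rewrite mulr_suml; apply: eq_bigr => e _.
rewrite adjE' !J2E eqxx cjl /= mul1r; ring.
Qed.

Lemma CK : adj J1 *m J2 = adj (WT V).
Proof.
apply/matrixP => x y; case: (idx2 x) => s [i ->]; case: (idx2 y) => m [j ->].
rewrite adjE' WE !mxE rmorph_sum sum3 (sum_one j) /=; last first.
  move=> a ne; rewrite big1 // => b _; rewrite big1 // => e _.
  by rewrite adjE' J1E J2E (negbTE ne) !mul0r mulr0.
apply: eq_bigr => b _.
rewrite (sum_one i) /=; last first.
  by move=> e ne; rewrite adjE' J1E J2E (negbTE ne) cjr !mulr0 mul0r.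
by rewrite adjE' J1E J2E eqxx /mxconj !mxE cjr /= mulr1 cjM eqxx mul1r.
Qed.


Lemma P12_scalar (P : 'M[C]_(n * n)) (z : 'I_n) : P1 P = P2 P ->
  P = (P (mxtens_index (z, z)) (mxtens_index (z, z)))%:M.
Proof.
move=> E.
have H1 : forall a b c d, P (mxtens_index (a, b)) (mxtens_index (c, d)) =
    (a == c)%:R * P (mxtens_index (b, z)) (mxtens_index (d, z)).
  by move=> a b c d; rewrite -P2_E -E P1_E eqxx mulr1.
apply/matrixP => x y; case: (idx2 x) => a [b ->]; case: (idx2 y) => c [d ->].
rewrite H1 (H1 b) !mxE tens_eq.
by case: (a == c); case: (b == d); rewrite ?mul1r ?mul0r ?mulr1n ?mulr0n.
Qed.

Lemma P1_one : P1 (1%:M : 'M[C]_(n * n)) = 1%:M.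
Proof.
apply/matrixP => x y; case: (idx3 x) => a [b [e ->]]; case: (idx3 y) => c [d [f ->]].
rewrite P1_E !mxE /t3 !tens_eq.
by case: (a == c); case: (b == d); case: (e == f); rewrite ?mul1r ?mul0r ?mulr1n ?mulr0n.
Qed.

Lemma P2_one : P2 (1%:M : 'M[C]_(n * n)) = 1%:M.
Proof.
apply/matrixP => x y; case: (idx3 x) => a [b [e ->]]; case: (idx3 y) => c [d [f ->]].
rewrite P2_E !mxE /t3 !tens_eq.
by case: (a == c); case: (b == d); case: (e == f); rewrite ?mul1r ?mul0r ?mulr1n ?mulr0n.
Qed.


Lemma P_triv (P : 'M[C]_(n * n)) (z : 'I_n) : P *m P = P -> P1 P = P2 P ->
  P = 0 \/ P = 1%:M.
Proof.
move=> iP E; have PE := P12_scalar z E.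
set l := P _ _ in PE.
have ll : l * l = l.
  have := congr1 (fun M : 'M[C]_(n * n) => M (mxtens_index (z, z)) (mxtens_index (z, z))) iP.
  by rewrite /= PE -scalar_mxM !mxE eqxx !mulr1n.
have : l * (l - 1) = 0 by rewrite mulrBr mulr1 ll subrr.
move/eqP; rewrite mulf_eq0 => /orP [/eqP l0|]; first by left; rewrite PE l0; apply/matrixP => ? ?; rewrite !mxE mul0rn.
by rewrite subr_eq0 => /eqP l1; right; rewrite PE l1.
Qed.

End Concrete.

Section Extra.
Variable C : numClosedFieldType.

Lemma mcomm k (A B : 'M[C]_k) (a : C) : a *: (A *m B) = 1%:M -> a *: (B *m A) = 1%:M.
Proof. by rewrite scalemxAl scalemxAr => /mulmx1C. Qed.

Lemma gcomm k (M : 'M[C]_k) c :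
  (M - 1%:M) *m (c *: M - 1%:M) = (c *: M - 1%:M) *m (M - 1%:M).
Proof.
rewrite !mulmxBl !mulmxBr !mul1mx !mulmx1 -scalemxAr -scalemxAl.
by rewrite sub_swap.
Qed.

Lemma gshift k (X Y K : 'M[C]_k) c : X *m K = K *m Y ->
  (X - 1%:M) *m (c *: X - 1%:M) *m K = K *m ((Y - 1%:M) *m (c *: Y - 1%:M)).
Proof.
move=> XK.
have e1 : (X - 1%:M) *m K = K *m (Y - 1%:M) by rewrite mulmxBl mulmxBr mul1mx mulmx1 XK.
have e2 : (c *: X - 1%:M) *m K = K *m (c *: Y - 1%:M).
  by rewrite mulmxBl mulmxBr mul1mx mulmx1 -scalemxAl -scalemxAr XK.
by rewrite -mulmxA e2 mulmxA e1 mulmxA.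
Qed.

End Extra.

Unset Implicit Arguments.

Theorem proposition6 (R : rcfType) (n r : nat) (V : 'I_r -> 'M[R[i]]_n) (Q : R) :
  (2 <= n)%N -> (1 <= r)%N ->
  (forall s m : 'I_r, \tr (adj (V s) *m V m) = (s == m)%:R) ->
  0 < Q ->
  let q : R[i] := real_complex R Q in
  let P := PT V in
  ((selfadj_idem P /\ P <> 0 /\ TL_rel q P) <-> unitary (q *: WT V))
  /\ (unitary (q *: WT V) <-> q ^+ 2 *: AT V = 1%:M)
  /\ ((selfadj_idem P /\ ~ trivial_sol P /\ main_rel q P /\ ~ TL_rel q P) <->
      (1 < Q /\ (forall a : R[i], eigenvalue (AT V) a <-> (a = 1 \/ a = (q ^+ 2)^-1)))).
Proof.
move=> n2 r1 horth Q0; cbv zeta.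
set q : R[i] := real_complex R Q.
set c := q ^+ 2.
have hq : q^* = q.
  by apply: conj_Creal; apply: ger0_real; rewrite /q ler0c ltW.
have cE : c = real_complex R (Q ^+ 2) by rewrite /c /q rmorphXn.
have cpos : 0 < c by rewrite cE ltcE /= eqxx /= exprn_gt0.
have hc : c^* = c by apply: conj_Creal; apply: ger0_real; exact: ltW.
have cnz : c != 0 by rewrite gt_eqF.
have h1 := CI1 horth; have h2 := CI2 horth.
have KE := CK V.
set W := WT V in KE *.
have XE : adj (J1 V) *m J2 V *m adj (adj (J1 V) *m J2 V) = adj W *m W by rewrite KE adjK.
have YE : adj (adj (J1 V) *m J2 V) *m (adj (J1 V) *m J2 V) = W *m adj W by rewrite KE adjK.
have PE := PT_E V.
have Psa : selfadj_idem (PT V).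
  split; first by rewrite PE adjM adjK.
  by rewrite PE mulmxA -(mulmxA (Vm V)) (Vm_iso horth) mulmx1.
have Pnz : PT V <> 0.
  move=> P0; have := congr1 (fun M => adj (Vm V) *m M *m Vm V) P0.
  rewrite /= PE mulmxA (Vm_iso horth) mul1mx (Vm_iso horth) mulmx0 mul0mx => /matrixP.
  move/(_ (Ordinal r1) (Ordinal r1)); rewrite !mxE eqxx /= => /eqP.
  by rewrite oner_eq0.
have TLE : TL_rel q (PT V) <-> c *: (adj W *m W) = 1%:M /\ c *: (W *m adj W) = 1%:M.
  rewrite /TL_rel CJ1 CJ2 -/c -XE -YE.
  split=> [[T1 T2]|[T1 T2]].
    by split; [apply/(TL1 _ _ h1) | apply/(TL2 _ _ h2)].
  by split; [apply/(TL1 _ _ h1) | apply/(TL2 _ _ h2)].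
have UE : unitary (q *: W) <-> c *: (W *m adj W) = 1%:M /\ c *: (adj W *m W) = 1%:M.
  rewrite /unitary adjZ hq -!scalemxAl -!scalemxAr !scalerA -expr2 -/c.
  by [].
have ATE : AT V = W *m adj W by [].
split.
  split=> [[_ [_ /TLE [T1 T2]]]|/UE [U1 U2]]; first by apply/UE.
  by split=> //; split=> //; apply/TLE.
split.
  rewrite UE ATE; split=> [[]//|U]; split=> //; exact: mcomm.
have ME : main_rel q (PT V) <->
    (adj W *m W - 1%:M) *m (c *: (adj W *m W) - 1%:M) = 0 /\
    (W *m adj W - 1%:M) *m (c *: (W *m adj W) - 1%:M) = 0.
  rewrite /main_rel CJ1 CJ2 -/c; apply: iff_trans (main_iff h1 h2 hc) _.
  by rewrite /= XE YE.
rewrite ATE.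
set X := adj W *m W in ME TLE *; set Y := W *m adj W in ME TLE UE *.
have aX : adj X = X by rewrite /X adjM adjK.
have aY : adj Y = Y by rewrite /Y adjM adjK.
have n0 : (0 < n)%N by apply: leq_trans n2.
have Pone_Y : PT V = 1%:M -> Y = 1%:M.
  move=> P1'; have e1 : J2 V *m adj (J2 V) = 1%:M by rewrite -CJ2 P1' P2_one.
  have X1 : X = 1%:M.
    by rewrite /X -XE adjM adjK mulmxA -(mulmxA (adj (J1 V))) e1 mulmx1 h1.
  by apply: mulmx1C.
have Y_Pone : Y = 1%:M -> PT V = 1%:M.
  move=> Y1; have E := Y1P h1 h2 (etrans YE Y1).
  have E' : P1 (PT V) = P2 (PT V) by rewrite CJ1 CJ2.
  by case: (P_triv (Ordinal n0) Psa.2 E') => // /Pnz.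
split.
- move=> [_ [ntriv [/ME [gX gY] nTL]]].
  have cY1 : c *: Y - 1%:M != 0.
    apply/eqP => /eqP; rewrite subr_eq0 => /eqP cY.
    by apply: nTL; apply/TLE; split=> //; exact: mcomm.
  have Y1 : Y - 1%:M != 0.
    by apply/eqP => /eqP; rewrite subr_eq0 => /eqP Y1; apply: ntriv; right; exact: Y_Pone.
  have gY' : (c *: Y - 1%:M) *m (Y - 1%:M) = 0 by rewrite -gcomm.
  have ev1 : eigenvalue Y 1.
    case: (nz_row cY1) => i ri; apply/eigenvalueP; exists (row i (c *: Y - 1%:M)) => //.
    apply/eqP; rewrite scale1r -subr_eq0 -{2}[row _ _]mulmx1 -mulmxBr -row_mul gY' row0.
    by [].
  have evc : eigenvalue Y c^-1.
    case: (nz_row Y1) => i ri; apply/eigenvalueP; exists (row i (Y - 1%:M)) => //.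
    have : row i (Y - 1%:M) *m (c *: Y - 1%:M) = 0 by rewrite -row_mul gY row0.
    rewrite mulmxBr mulmx1 -scalemxAr => /eqP; rewrite subr_eq0 => /eqP cv.
    by rewrite -{2}cv scalerA mulVf // scale1r.
  have evs : forall a, eigenvalue Y a -> a = 1 \/ a = c^-1.
    move=> a /eigenvalueP [v vY vnz].
    have := g_eig c vY; rewrite gY mulmx0 => /esym/eqP.
    rewrite scaler_eq0 (negbTE vnz) orbF mulf_eq0 => /orP [|].
      by rewrite subr_eq0 => /eqP ->; left.
    rewrite subr_eq0 => /eqP ca; right.
    by apply: (mulfI cnz); rewrite ca mulfV.
  split.
    case/eigenvalueP: evc => v vY vnz.
    have vY' : v *m (adj (adj (J1 V) *m J2 V) *m (adj (J1 V) *m J2 V)) = c^-1 *: v.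
      by rewrite YE.
    have [x [y [x0 y0 yx cxy]]] := Ybound h1 h2 vY' vnz.
    have ic1 : c^-1 <= 1 by rewrite -(ler_pM2r x0) mul1r cxy.
    have c1 : 1 <= c by rewrite -invf_le1.
    have cn1 : c != 1.
      apply/eqP => c1'; move/eqP: Y1; apply.
      have aY1 : adj (Y - 1%:M) = Y - 1%:M by rewrite adjB adj1 aY.
      have := herm_sq2 (B := 1%:M) aY1; rewrite !mulmx1; apply.
      by move: gY; rewrite c1' scale1r.
    have c1s : 1 < c by rewrite lt_def cn1 c1.
    move: c1s; rewrite cE ltcE /= => /andP [_ HQ].
    rewrite expr2 in HQ; rewrite ltNge; apply/negP => HQ1.
    have : Q * Q <= 1 * 1 by apply: ler_pM => //; exact: ltW.
    by rewrite mulr1 leNgt HQ.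
  move=> a; split; first exact: evs.
  by case=> ->; [exact: ev1 | exact: evc].
- move=> [Q1 Hspec].
  have c1 : 1 < c.
    rewrite cE ltcE /= eqxx /= expr2.
    by have := ltr_pM ler01 ler01 Q1 Q1; rewrite mulr1.
  have cn1 : c != 1 by rewrite gt_eqF.
  have ev0 : ~ eigenvalue Y 0.
    move/Hspec => [] /eqP; rewrite eq_sym ?oner_eq0 ?invr_eq0 ?(negbTE cnz) //.
  split; first exact: Psa.
  split.
    case=> [/Pnz//|/Pone_Y Y1].
    have := Hspec c^-1; case=> _ /(_ (or_intror erefl)).
    rewrite Y1 => /eigenvalueP [v]; rewrite mulmx1 => vv vnz.
    move/eqP: vv; rewrite -subr_eq0 -{1}[v]scale1r -scalerBl scaler_eq0 (negbTE vnz) orbF.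
    rewrite subr_eq0 => /eqP /(congr1 GRing.inv); rewrite invrK invr1 => c1'.
    by move/eqP: cn1; apply.
  split.
    apply/ME.
    have hci : (c^-1)^* = c^-1.
      by apply: conj_Creal; apply: ger0_real; rewrite invr_ge0 ltW.
    have gY : (Y - 1%:M) *m (c *: Y - 1%:M) = 0.
      have H := spec2 aY (conjC1 _) hci (fun a => (Hspec a).1).
      have -> : c *: Y - 1%:M = c *: (Y - c^-1%:M).
        by rewrite scalerBr scale_scalar_mx mulfV.
      by rewrite -scalemxAr H scaler0.
    split=> //.
    have uK : adj W \in unitmx.
      rewrite unitmxE unitfE; apply/negP; rewrite -det_tr => /det0P [v vnz vK].
      apply: ev0; apply/eigenvalueP; exists (adj v^T).
        have e : adj W *m v^T = 0 by rewrite -(trmxK (adj W)) -trmx_mul vK trmx0.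
        have e' : adj v^T *m W = 0 by rewrite -[W]adjK -adjM e adj0.
        by rewrite /Y mulmxA e' mul0mx scale0r.
      apply/eqP => av; move/eqP: vnz; apply.
      by rewrite -(trmxK v) -[v^T]adjK av adj0 trmx0.
    have XK : X *m adj W = adj W *m Y by rewrite /X /Y mulmxA.
    have := gshift c XK.
    rewrite gY mulmx0 => gXK.
    by rewrite -(mulmxK uK ((X - 1%:M) *m (c *: X - 1%:M))) gXK mul0mx.
  move/TLE => [_ cY].
  have := Hspec 1; case=> _ /(_ (or_introl erefl)) /eigenvalueP [v vY vnz].
  have : v *m (c *: Y) = v by rewrite cY mulmx1.
  rewrite -scalemxAr vY scale1r => /eqP; rewrite -subr_eq0 -{2}[v]scale1r -scalerBl.
  rewrite scaler_eq0 (negbTE vnz) orbF subr_eq0 => c1'.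
  by move/negP: cn1; apply.
Qed.
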